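(* Let $A=(a_{ij})\in\mathcal{B}^{m,n}$ and let $k$ be a field. Let $k[A]=k[x_{ij} : a_{ij}=1]$, let $\Delta_A$ be the simplicial complex on vertex set $\{a_{ij}: a_{ij}=1\}$ whose faces are the isolated sets of $A$, let $I_{\Delta_A}\subseteq k[A]$ be its Stanley–Reisner ideal (generated by $\prod_{a_{ij}\in S}x_{ij}$ for all non-faces $S$), and let the isolation ideal be \[ J_A=I_{\Delta_A}+\left(x_{ij}^2 : a_{ij}=1\right)\subseteq k[A]. \] Let $S=k[A]/J_A$. Then \[ \operatorname{reg}(S)=\iota(A)=\dim(\Delta_A)+1\leq \operatorname{brank}(A). \]
   Context: $\mathcal{B}$ is the Boolean semiring $\{0,1\}$ with $\vee$ (or), $\wedge$ (and); the Boolean product of $V\in\mathcal{B}^{m,r}$, $H\in\mathcal{B}^{r,n}$ is $[V\wedge H]_{ij}=\bigvee_{\ell=1}^r V_{i\ell}\wedge H_{\ell j}$, and $\operatorname{brank}(A)=\min\{r : A=V\wedge H,\ V\in\mathcal{B}^{m,r},\ H\in\mathcal{B}^{r,n}\}$. A pair of entries $\{a_{ij},a_{k\ell}\}$ is isolated if $a_{ij}=a_{k\ell}=1$ and $a_{i\ell}\wedge a_{kj}=0$. A subset of entries equal to $1$ is an isolated set if it has size one or all its pairs are isolated. The isolation number $\iota(A)$ is the maximum size of an isolated set of $A$. $\operatorname{reg}$ is Castelnuovo–Mumford regularity over $k[A]$ with standard grading; $\dim(\Delta_A)$ is the maximum face cardinality minus one. *)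

(* Defs.v *)
From HB Require Import structures.
From mathcomp Require Import all_boot all_order all_algebra.
From mathcomp Require Import mpoly.
Set Implicit Arguments. Unset Strict Implicit. Unset Printing Implicit Defensive.
Import Order.TTheory GRing.Theory.
Local Open Scope ring_scope.

Section Bool.
Variables (m n : nat) (A : 'M[bool]_(m, n)).

Definition ones := { ij : 'I_m * 'I_n | A ij.1 ij.2 }.
HB.instance Definition _ := Finite.copy ones { ij : 'I_m * 'I_n | A ij.1 ij.2 }.

(* {a_ij, a_kl} is an isolated pair (both entries are 1 by construction) *)
Definition isolated_pair (p q : ones) : bool :=
  ~~ (A (val p).1 (val q).2 && A (val q).1 (val p).2).

Definition isolated_set (S : {set ones}) : bool :=
  (#|S| == 1)%N || [forall p in S, forall q in S, (p != q) ==> isolated_pair p q].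

Definition isolation_number : nat := \max_(S : {set ones} | isolated_set S) #|S|.

Definition face_Delta (S : {set ones}) : bool := isolated_set S.
Definition dim_Delta : int :=
  (\max_(S : {set ones} | face_Delta S) #|S|)%:Z - 1.
End Bool.

Definition bool_prod (m r n : nat) (V : 'M[bool]_(m, r)) (H : 'M[bool]_(r, n))
  : 'M[bool]_(m, n) := \matrix_(i, j) [exists l, V i l && H l j].

(* Boolean rank: least r with A = V /\ H (r = n always works, so the
   minimum over r <= n is the true minimum). *)
Definition brank (m n : nat) (A : 'M[bool]_(m, n)) : nat :=
  \big[minn/n]_(r < n.+1 | [exists V : 'M[bool]_(m, r),
                             [exists H : 'M[bool]_(r, n), bool_prod V H == A]]) r.

Section Ring.
Variables (k : fieldType) (m n : nat) (A : 'M[bool]_(m, n)).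

Definition nvar := #|{: ones A}|.
Definition kA := {mpoly k[nvar]}.
Definition xv (v : ones A) : kA := 'X_(enum_rank v).

Definition ideal_gen (N : nat) (G : {mpoly k[N]} -> Prop) (p : {mpoly k[N]}) : Prop :=
  exists s : seq ({mpoly k[N]} * {mpoly k[N]}),
    (forall c, c \in s -> G c.2) /\ p = \sum_(c <- s) c.1 * c.2.

Definition SR_gen (p : kA) : Prop :=
  exists S : {set ones A}, ~~ face_Delta S /\ p = \prod_(v in S) xv v.
Definition sq_gen (p : kA) : Prop := exists v : ones A, p = xv v ^+ 2.

Definition J_A (p : kA) : Prop := ideal_gen (fun g => SR_gen g \/ sq_gen g) p.

(* ---------------- Castelnuovo--Mumford regularity of S = k[A]/J_A -------
   Graded Betti numbers beta_{i,j}(S) = dim_k Tor_i^{k[A]}(S,k)_j, with Tor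
   computed by the Koszul resolution of k: Tor_i(S,k) = H_i(x; S), the
   homology of S (x) K(x_v). Chains of K(x; k[A]) are functions from subsets
   T of the variables (basis e_T, homological degree #|T|, internal degree
   #|T|) to k[A]; chains of S (x) K are taken modulo J_A. *)
Definition chain := {ffun {set 'I_nvar} -> kA}.

Definition kdiff (z : chain) : chain :=
  [ffun U : {set 'I_nvar} =>
     \sum_(t : 'I_nvar | t \notin U)
        (-1) ^+ #|[set u in U | (u < t)%N]| * 'X_t * z (t |: U)].

(* H_i(x; S)_{i+e} <> 0, i.e. beta_{i,i+e}(S) <> 0 *)
Definition betti_nz (i e : nat) : Prop :=
  exists z : chain,
    [/\ forall T : {set 'I_nvar}, #|T| = i -> z T \is e.-homog,
        forall T : {set 'I_nvar}, #|T| <> i -> z T = 0,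
        forall U : {set 'I_nvar}, J_A (kdiff z U)
      & ~ (exists w : chain, forall T : {set 'I_nvar}, #|T| = i -> J_A (z T - kdiff w T))].

(* reg(S) = max { j - i : beta_{i,j}(S) <> 0 } equals r  (here j - i = e) *)
Definition reg_S_eq (r : nat) : Prop :=
  (exists i, betti_nz i r) /\ (forall i e, betti_nz i e -> (e <= r)%N).
End Ring.

(* Main.v *)
Require Import Defs.
From HB Require Import structures.
From mathcomp Require Import all_boot all_order all_algebra.
From mathcomp Require Import mpoly.
Import GRing.Theory.
Local Open Scope ring_scope.

Section Help.
Variables (k : fieldType) (m n : nat) (A : 'M[bool]_(m, n)).

Local Notation J := (@J_A k m n A).
Local Notation iota := (isolation_number A).

Lemma J0 : J 0.
Proof. by exists [::]; split => //; rewrite big_nil. Qed.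

Lemma JD p q : J p -> J q -> J (p + q).
Proof.
move=> [s1 [H1 ->]] [s2 [H2 ->]]; exists (s1 ++ s2); split; last by rewrite big_cat.
by move=> c; rewrite mem_cat => /orP [/H1|/H2].
Qed.

Lemma JMl r p : J p -> J (r * p).
Proof.
move=> [s [H ->]]; exists [seq (r * c.1, c.2) | c <- s]; split.
  by move=> c /mapP [c' /H Hc' ->].
by rewrite big_map mulr_sumr; apply: eq_bigr => c _; rewrite mulrA.
Qed.

Lemma JZ (c : k) p : J p -> J (c *: p).
Proof.
move=> [s [H ->]]; exists [seq (c *: d.1, d.2) | d <- s]; split.
  by move=> d /mapP [d' /H Hd' ->].
by rewrite big_map scaler_sumr; apply: eq_bigr => d _; rewrite scalerAl.
Qed.

Lemma Jgen g : @SR_gen k m n A g \/ @sq_gen k m n A g -> J g.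
Proof. by move=> Hg; exists [:: (1, g)]; split; [move=> c; rewrite inE => /eqP -> | rewrite big_seq1 mul1r]. Qed.

Lemma Jsum (I : Type) (r : seq I) (P : pred I) (F : I -> kA k A) :
  (forall i, P i -> J (F i)) -> J (\sum_(i <- r | P i) F i).
Proof.
move=> H; elim: r => [|x r IH]; first by rewrite big_nil; exact: J0.
by rewrite big_cons; case: ifP => // Px; apply: JD => //; apply: H.
Qed.


Definition mset (S : {set ones A}) : 'X_{1..nvar A} :=
  [multinom (enum_val i \in S : nat) | i < nvar A].

Lemma prod_xv (S : {set ones A}) : \prod_(v in S) xv k v = 'X_[mset S].
Proof.
rewrite mpolyXE_id (reindex (@enum_rank (ones A))) /=; last first.
  by apply: onW_bij; apply: enum_rank_bij.
rewrite big_mkcond; apply: eq_bigr => v _.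
by rewrite mnmE enum_rankK; case: (v \in S).
Qed.

Lemma mdeg_mset (S : {set ones A}) : mdeg (mset S) = #|S|.
Proof.
rewrite mdegE (reindex (@enum_rank (ones A))) /=; last first.
  by apply: onW_bij; apply: enum_rank_bij.
rewrite -sum1_card [in RHS]big_mkcond /=; apply: eq_bigr => v _.
by rewrite mnmE enum_rankK; case: (v \in S).
Qed.

Lemma coefMX0 (p : kA k A) (mg ms : 'X_{1..nvar A}) :
  (exists i, ms i < mg i)%N -> (p * 'X_[mg])@_ms = 0.
Proof.
move=> [i Hi]; rewrite mcoeffM big1 // => kk /eqP Hk.
rewrite mcoeffX; case: eqP => [E|]; last by rewrite mulr0.
have := congr1 (fun x : 'X_{1..nvar A} => x i) Hk; rewrite /= mnmDE => HH.
by move: Hi; rewrite HH E ltnNge leq_addl.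
Qed.


Lemma iso_pairs (S : {set ones A}) : isolated_set S ->
  forall p q, p \in S -> q \in S -> p != q -> isolated_pair p q.
Proof.
case/orP => [/cards1P [x ->] p q|/forallP H p q pS qS neq].
  by rewrite !inE => /eqP -> /eqP ->; rewrite eqxx.
by move: (H p); rewrite pS /= => /forallP /(_ q); rewrite qS neq.
Qed.

Lemma iso_sub (S S' : {set ones A}) : S' \subset S -> isolated_set S -> isolated_set S'.
Proof.
move=> sub /iso_pairs H; apply/orP; right.
apply/forallP => p; apply/implyP => pS; apply/forallP => q; apply/implyP => qS.
by apply/implyP; apply: H; apply: (subsetP sub).
Qed.

Lemma notJ (S : {set ones A}) (p : kA k A) : isolated_set S -> J p -> p@_(mset S) = 0.
Proof.
move=> iS [s [Hs ->]].
elim: s Hs => [|c s IH] Hs; first by rewrite big_nil mcoeff0.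
rewrite big_cons mcoeffD IH ?addr0; last by move=> d ds; apply: Hs; rewrite inE ds orbT.
have [[S' [nf ->]]|[v ->]] := Hs c (mem_head _ _).
  rewrite prod_xv coefMX0 //.
  have : ~~ (S' \subset S) by apply: contra nf => sub; apply: iso_sub iS.
  case/subsetPn => v vS' vS; exists (enum_rank v).
  by rewrite !mnmE enum_rankK vS' (negbTE vS).
rewrite /xv expr2 -mpolyXD coefMX0 //; exists (enum_rank v).
rewrite mnmDE /mset !mnmE enum_rankK eqxx; by case: (_ \in _).
Qed.


Lemma iso_le (S : {set ones A}) : isolated_set S -> (#|S| <= iota)%N.
Proof. by move=> iS; apply: (@leq_bigmax_cond _ (@isolated_set _ _ A) (fun S => #|S|)). Qed.

Lemma mono_in_J (mm : 'X_{1..nvar A}) : (iota < mdeg mm)%N -> J 'X_[mm].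
Proof.
move=> Hdeg; case: (boolP [exists i, 1 < mm i]%N) => [/existsP [i Hi]|Hn].
  pose m' := [multinom (if j == i then mm j - 2 else mm j)%N | j < nvar A].
  have -> : mm = (m' + (U_(i) + U_(i)))%MM.
    apply/mnmP => j; rewrite !mnmDE !mnmE; case: eqP => [->|Hj]; last by rewrite (negbTE (introN eqP (nesym Hj))) addn0.
    by rewrite eqxx addnn subnK.
  rewrite mpolyXD; apply: JMl; apply: Jgen; right; exists (enum_val i).
  by rewrite /xv enum_valK expr2 -mpolyXD.
pose S := [set v | mm (enum_rank v) != 0%N].
have E : mm = mset S.
  apply/mnmP => j; rewrite /mset mnmE inE enum_valK.
  have : ~~ (1 < mm j)%N by apply: contra Hn => H; apply/existsP; exists j.
  by case: (mm j) => [|[|]].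
rewrite E -prod_xv; apply: Jgen; left; exists S; split => //.
apply/negP => /iso_le; rewrite -mdeg_mset -E.
by rewrite leqNgt Hdeg.
Qed.


Lemma homog_in_J (p : kA k A) e : p \is e.-homog -> (iota < e)%N -> J p.
Proof.
move=> /dhomogP Hp He; rewrite (mpolyE p) big_seq; apply: Jsum => mm Hm.
by apply: JZ; apply: mono_in_J; rewrite Hp.
Qed.

Lemma iso_card (T : finType) (f : ones A -> option T) (S : {set ones A}) :
  isolated_set S -> (forall p, p \in S -> f p != None) ->
  (forall p q, f p = f q -> f p != None -> A (val p).1 (val q).2 && A (val q).1 (val p).2) ->
  (#|S| <= #|T|)%N.
Proof.
move=> iS Hn Hf; rewrite -(@card_in_imset _ _ f); last first.
  move=> p q pS qS E; apply/eqP; apply: contraT => neq.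
  have := iso_pairs S iS p q pS qS neq; rewrite /isolated_pair Hf //.
  by rewrite E -E; apply: Hn.
have -> : #|T| = #|[set~ (None : option T)]| by rewrite cardsC1 card_option.
apply: subset_leq_card; apply/subsetP => x /imsetP [p pS ->].
by rewrite !inE; apply: Hn.
Qed.

Lemma iso_set0 : isolated_set (set0 : {set ones A}).
Proof. by apply/orP; right; apply/forallP => p; rewrite in_set0. Qed.

Lemma iota_le_n : (iota <= n)%N.
Proof.
apply/bigmax_leqP => S iS.
apply: leq_trans (_ : #|S| <= #|'I_n|)%N _; last by rewrite card_ord.
apply: (@iso_card _ (fun p => Some (val p).2)) => // p q [E] _.
have E' : (val p).2 = (val q).2 := E.
by rewrite -E' {2}E' (valP p) (valP q).
Qed.


Lemma iota_le_brank : (iota <= brank A)%N.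
Proof.
rewrite /brank; apply: (big_ind (fun x => iota <= x)%N).
- exact: iota_le_n.
- by move=> x y; rewrite leq_min => -> ->.
move=> r /existsP [V /existsP [H /eqP E]].
have bp i j : A i j = [exists l, V i l && H l j] by rewrite -E mxE.
apply/bigmax_leqP => S iS.
apply: leq_trans (_ : #|S| <= #|'I_r|)%N _; last by rewrite card_ord.
apply: (@iso_card _ (fun p => [pick l | V (val p).1 l && H l (val p).2])) => //.
  move=> p pS; case: pickP => // Hn.
  have := valP p; rewrite bp => /existsP [l Hl].
  by rewrite Hn in Hl.
move=> p q; case: pickP => [l /andP [Vp Hp]|//]; case: pickP => [l' /andP [Vq Hq] [E'] _|//]; subst l'.
rewrite !bp; apply/andP; split; apply/existsP; exists l; apply/andP; split => //.
Qed.

End Help.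

Theorem theorem4p17 (k : fieldType) (m n : nat) (A : 'M[bool]_(m, n)) :
  [/\ reg_S_eq k A (isolation_number A),
      (isolation_number A)%:Z = dim_Delta A + 1
    & (isolation_number A <= brank A)%N].
Proof.
split; last exact: iota_le_brank.
- split.
  + exists (nvar A).
    have [S iS ES] := @eq_bigmax_cond _ (@isolated_set _ _ A) (fun S => #|S|)
      (introT card_gt0P (ex_intro _ set0 (@iso_set0 m n A))).
    have Eiota : isolation_number A = #|S| := ES.
    exists [ffun T => if T == setT then 'X_[@mset m n A S] else (0 : kA k A)]; split.
    * move=> T _; rewrite ffunE Eiota; case: eqP => _; last exact: dhomog0.
      by rewrite dhomogX /= mdeg_mset.
    * by move=> T HT; rewrite ffunE; case: eqP => // E; rewrite E cardsT card_ord in HT.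
    * move=> U; rewrite /kdiff ffunE; apply: Jsum => t _; rewrite ffunE.
      case: eqP => _; last by rewrite mulr0; apply: J0.
      rewrite -mulrA; apply: JMl; rewrite -mpolyXD; apply: mono_in_J.
      by rewrite mdegD mdeg1 mdeg_mset -Eiota.
    * move=> [w Hw]; have HT : #|[set: 'I_(nvar A)]| = nvar A by rewrite cardsT card_ord.
      have := Hw setT HT.
      rewrite ffunE eqxx /kdiff ffunE big_pred0 => [|t]; last by rewrite in_setT.
      rewrite subr0 => /(@notJ k m n A S _ iS).
      by rewrite mcoeffX eqxx => /eqP; rewrite oner_eq0.
  + move=> i e [z [Hh Hz Hc Hnb]]; rewrite leqNgt; apply/negP => He; apply: Hnb.
    exists [ffun _ => (0 : kA k A)] => T HT; have -> : kdiff [ffun _ => (0 : kA k A)] T = 0.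
        by rewrite /kdiff ffunE big1 // => t _; rewrite ffunE mulr0.
    by rewrite subr0; apply: homog_in_J (Hh T HT) He.
- by rewrite /dim_Delta /face_Delta subrK.
Qed.
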